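(* Let $C:\{0,1\}^n\to\{0,1\}^m$ be a $(q,\delta,\varepsilon)$ insdel LDC with a non-adaptive decoder $\mathrm{Dec}$ that always queries exactly $q$ positions. Let $\mathcal D$ be any probability distribution over subsets $D\subseteq[2m]$ such that every $D$ in its support satisfies $|D\cap[m]|\le\delta m$ and $|D|\le m$. Then for every $i\in[n]$, if $Q$ is the random query set of $\mathrm{Dec}(\cdot,m,i)$ and $D\sim\mathcal D$ is independent of it, $\Pr[Q^D\in\mathrm{Good}_i]\ge 3\varepsilon/2$.
   Context: $\mathrm{ED}(u,v)$ is the minimum number of insertions and deletions transforming $u$ into $v$. $C$ is a $(q,\delta,\varepsilon)$ insdel LDC ($\varepsilon\in(0,1/2]$) if a randomized $\mathrm{Dec}$ given oracle access to $y\in\{0,1\}^{m'}$, $m'$ and $i\in[n]$ reads at most $q$ symbols and satisfies $\Pr[\mathrm{Dec}(y,m',i)=x_i]\ge1/2+\varepsilon$ whenever $\mathrm{ED}(C(x),y)\le2\delta m$; non-adaptive means its query distribution does not depend on $y$. For $x\in\{0,1\}^n$, $C'(x)\in\{0,1\}^{2m}$ is $C(x)$ followed by $m$ independent uniform random bits. $\mathrm{Good}_i$ is the set of $Q\in\binom{[2m]}{q}$ such that some $f:\{0,1\}^q\to\{0,1\}$ has $\Pr[f(C'(x)_Q)=x_i]\ge1/2+\varepsilon/4$ over uniform $x$ and padded bits. For $D\subseteq[2m]$, $\phi_D:[2m-|D|]\to[2m]$ is $\phi_D(j)=\min\{j'\in[2m]:|[j']\setminus D|\ge j\}$ (the original position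 of the $j$-th surviving symbol after deleting positions in $D$), and for $Q=\{k_0<\dots<k_{q-1}\}\subseteq[m]$ with $|D|\le m$, $Q^D=\{\phi_D(k_0),\dots,\phi_D(k_{q-1})\}$. *)

(* Defs.v *)
From mathcomp Require Import all_boot all_order all_algebra.
Set Implicit Arguments. Unset Strict Implicit. Unset Printing Implicit Defensive.
Import Order.TTheory GRing.Theory Num.Theory.
Local Open Scope ring_scope.

Definition insdel_step (u v : seq bool) : Prop :=
  (exists i : nat, (i < size u)%N /\ v = take i u ++ drop i.+1 u) \/
  (exists (i : nat) (b : bool), (i <= size u)%N /\ v = take i u ++ b :: drop i u).

Fixpoint insdel_reach (k : nat) (u v : seq bool) : Prop :=
  match k with
  | 0 => u = v
  | k'.+1 => exists w, insdel_step u w /\ insdel_reach k' w v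
  end.

Definition ED_le (R : realFieldType) (u v : seq bool) (t : R) : Prop :=
  exists k : nat, insdel_reach k u v /\ (k%:R <= t).

Definition ffseq (k : nat) (w : {ffun 'I_k -> bool}) : seq bool :=
  [seq w j | j <- enum 'I_k].

(* One outcome of the decoder's coins on inputs (m', i): a query set Q
   subset of [m'] and an output function of the received word y
   (required to depend only on y restricted to Q). *)
Notation dec_outcome m' :=
  ({set 'I_m'} * {ffun {ffun 'I_m' -> bool} -> bool})%type.

(* a non-adaptive randomized decoder: for each m' and i, a probability
   distribution (independent of y) on outcomes *)
Definition decoder (R : realFieldType) (n : nat) :=
  forall m' : nat, 'I_n -> {ffun dec_outcome m' -> R}.

Definition is_distr (R : realFieldType) (T : finType) (p : {ffun T -> R}) : Prop :=
  (forall t, 0 <= p t) /\ \sum_(t : T) p t = 1.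

Definition dec_prob (R : realFieldType) n (Dec : decoder R n) (m' : nat)
  (i : 'I_n) (y : {ffun 'I_m' -> bool}) (b : bool) : R :=
  \sum_(o : dec_outcome m' | o.2 y == b) Dec m' i o.

Definition insdel_LDC (R : realFieldType) (n m q : nat)
  (C : {ffun 'I_n -> bool} -> {ffun 'I_m -> bool}) (delta eps : R)
  (Dec : decoder R n) : Prop :=
  [/\ forall m' i, is_distr (Dec m' i),
      (forall m' i (o : dec_outcome m'), 0 < Dec m' i o ->
         (#|o.1| <= q)%N /\
         forall y y' : {ffun 'I_m' -> bool},
           (forall j, j \in o.1 -> y j = y' j) -> o.2 y = o.2 y') &
      forall (x : {ffun 'I_n -> bool}) (m' : nat) (y : {ffun 'I_m' -> bool}) (i : 'I_n),
        ED_le (ffseq (C x)) (ffseq y) (2 * delta * m%:R) ->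
        1 / 2 + eps <= dec_prob Dec i y (x i)].

Definition Cpad n m (C : {ffun 'I_n -> bool} -> {ffun 'I_m -> bool})
  (x : {ffun 'I_n -> bool}) (r : {ffun 'I_m -> bool}) : {ffun 'I_(m + m) -> bool} :=
  [ffun j => match split j with inl a => C x a | inr b => r b end].

(* w_S : the symbols of w at the positions of S, in increasing order,
   as an element of {0,1}^q (meaningful when #|S| = q) *)
Definition restr (k q : nat) (w : {ffun 'I_k -> bool}) (S : {set 'I_k}) :
  {ffun 'I_q -> bool} :=
  [ffun t : 'I_q => nth false [seq w j | j <- enum S] t].

Definition Good (R : realFieldType) (n m q : nat)
  (C : {ffun 'I_n -> bool} -> {ffun 'I_m -> bool}) (eps : R) (i : 'I_n)
  (S : {set 'I_(m + m)}) : bool :=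
  (#|S| == q) &&
  [exists f : {ffun {ffun 'I_q -> bool} -> bool},
     1 / 2 + eps / 4 <=
     #|[set xr : {ffun 'I_n -> bool} * {ffun 'I_m -> bool} |
          f (restr q (Cpad C xr.1 xr.2) S) == xr.1 i]|%:R / (2 ^ n * 2 ^ m)%:R].

(* |[j+1] \ D| in 1-indexed terms: positions t <= j (0-indexed) not in D *)
Definition surv (m2 : nat) (D : {set 'I_m2}) (j : nat) : nat :=
  #|[set t : 'I_m2 | (t <= j)%N && (t \notin D)]|.

(* j' = phi_D(k+1) - 1, i.e. j' (0-indexed) is the least position with
   |[j'+1] \ D| >= k+1 *)
Definition phi_is (m2 : nat) (D : {set 'I_m2}) (k : nat) (j' : 'I_m2) : bool :=
  (k.+1 <= surv D j')%N && [forall t : 'I_m2, (t < j')%N ==> (surv D t < k.+1)%N].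

Definition QD (m : nat) (Q : {set 'I_m}) (D : {set 'I_(m + m)}) : {set 'I_(m + m)} :=
  [set j' : 'I_(m + m) | [exists k in Q, phi_is D k j']].

(* Main.v *)
Require Import Defs.
From mathcomp Require Import all_boot all_order all_algebra.
From mathcomp Require Import zify ring lra.
Import Order.TTheory GRing.Theory Num.Theory.
Local Open Scope ring_scope.
Set Implicit Arguments. Unset Strict Implicit. Unset Printing Implicit Defensive.

Lemma step_cons x u v : insdel_step u v -> insdel_step (x::u) (x::v).
Proof.
case=> [[i [hi ->]]|[i [b [hi ->]]]].
  by rewrite /insdel_step; left; exists i.+1; split.
by rewrite /insdel_step; right; exists i.+1, b; split.
Qed.

Lemma reach_cons k x u v : insdel_reach k u v -> insdel_reach k (x::u) (x::v).
Proof.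
elim: k u => [|k IH] u /=; first by move=> ->.
by case=> w [s r]; exists (x::w); split; [apply: step_cons|apply: IH].
Qed.

Lemma reach_trans a b u v w :
  insdel_reach a u v -> insdel_reach b v w -> insdel_reach (a + b) u w.
Proof.
elim: a u => [|a IH] u /=; first by move=> ->.
by case=> z [s r] h; exists z; split => //; apply: IH.
Qed.

Lemma reach_mask b u : size b = size u -> insdel_reach (count negb b) u (mask b u).
Proof.
elim: u b => [|x u IH] [|c b] //= [hs].
case: c => /=; first by apply: reach_cons; apply: IH.
exists u; split; last exact: IH.
rewrite /insdel_step; left; exists 0%N; split; first by []. rewrite take0 drop1. by [].
Qed.

Lemma reach_app u t : insdel_reach (size t) u (u ++ t).
Proof.
elim/last_ind: t => [|t b IH]; first by rewrite cats0.
rewrite size_rcons -addn1; apply: reach_trans IH _.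
exists (u ++ rcons t b); split => //.
rewrite /insdel_step; right; exists (size (u ++ t)), b; split => //.
by rewrite take_size drop_size -cats1 catA.
Qed.

Lemma nth_mask_phi (T : Type) (x0 : T) b w k j :
  size b = size w -> (k < count id (take j.+1 b))%N ->
  (forall t, (t < j)%N -> (count id (take t.+1 b) <= k)%N) ->
  nth x0 (mask b w) k = nth x0 w j.
Proof.
elim: b w k j => [|c b IH] [|x w] k j //= [hs].
case: j => [|j] /=.
  rewrite take0 /= addn0; case: c => //=; case: k => //.
move=> hk ht; have h0 := ht 0%N erefl; rewrite /= take0 /= addn0 in h0.
case: c h0 hk ht => /= h0 hk ht.
  case: k h0 hk ht => [|k] //= h0 hk ht.
  apply: IH => //.
  by move=> t ht'; have := ht t.+1 ht'; rewrite /= add1n ltnS.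
apply: IH => //.
by move=> t ht'; have := ht t.+1 ht'; rewrite /= add0n.
Qed.

Lemma count_take_S (b : seq bool) j : (count id (take j.+1 b) <= (count id (take j b)).+1)%N.
Proof.
elim: b j => [|c b IH] [|j] //=; first by rewrite take0 /=; case: c.
by case: c => /=; rewrite ?add1n ?add0n ?ltnS //; apply: leq_trans (IH j) _.
Qed.

Lemma count_enum (T : finType) (P : pred T) : count P (enum T) = #|P|.
Proof. by rewrite cardE enumT -size_filter /enum_mem. Qed.

Lemma filter_iota_lt j N : [seq v <- iota 0 N | (v < j)%N] = iota 0 (minn j N).
Proof.
elim: N => [|N IH]; first by rewrite minn0.
rewrite -addn1 iotaD filter_cat IH /= add0n.
case: (ltnP N j) => h.
  by rewrite (minn_idPr (_ : (N + 1 <= j)%N)) ?addn1 // -addn1 iotaD.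
rewrite cats0 (minn_idPl (_ : (j <= N + 1)%N)) //; lia.
Qed.

Lemma take_enum_ord N j : take j (enum 'I_N) = [seq t <- enum 'I_N | (nat_of_ord t < j)%N].
Proof.
apply: (inj_map val_inj); rewrite map_take.
have -> : [seq val i | i <- [seq t <- enum 'I_N | (nat_of_ord t < j)%N]] =
          [seq v <- [seq val i | i <- enum 'I_N] | (v < j)%N] by rewrite filter_map.
by rewrite val_enum_ord take_iota filter_iota_lt.
Qed.


Definition bD m (D : {set 'I_(m+m)}) : seq bool := [seq (t : 'I_(m+m)) \notin D | t <- enum 'I_(m+m)].

Lemma surv_count m (D : {set 'I_(m+m)}) j : surv D j = count id (take j.+1 (bD D)).
Proof.
rewrite /surv /bD -map_take count_map take_enum_ord count_filter count_enum.
by apply: eq_card => t; rewrite !inE /= andbC.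
Qed.

Definition phi m (D : {set 'I_(m+m)}) (k : 'I_m) : 'I_(m+m) :=
  odflt (lshift m k) [pick j | phi_is D k j].

Lemma phi_is_ex m (D : {set 'I_(m+m)}) (k : 'I_m) : (#|D| <= m)%N -> exists j, phi_is D k j.
Proof.
move=> hD.
have hk := ltn_ord k.
have hN : ((m + m).-1 < m + m)%N by lia.
pose P := fun j => (j < m+m)%N && (k.+1 <= surv D j)%N.
have exP : exists j, P j.
  exists (m+m).-1; rewrite /P hN /=.
  have -> : surv D (m+m).-1 = #|~: D|.
    rewrite /surv; apply: eq_card => t; rewrite !inE.
    by have := ltn_ord t; case: (t \in D) => /=; rewrite ?andbF ?andbT //; lia.
  have := cardsC D; rewrite card_ord; lia.
case: (ex_minnP exP) => j /andP [hj hs] hmin.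
exists (Ordinal hj); rewrite /phi_is hs /=; apply/forallP => t; apply/implyP => ht.
rewrite ltnNge; apply/negP => h.
have := hmin t; rewrite /P ltn_ord h => /(_ erefl); rewrite leqNgt ht.
by [].
Qed.

Lemma phi_isP m (D : {set 'I_(m+m)}) (k : 'I_m) : (#|D| <= m)%N -> phi_is D k (phi D k).
Proof.
move=> hD; rewrite /phi; case: pickP => [j //|none]; exfalso.
by case: (phi_is_ex k hD) => j hj; rewrite none in hj.
Qed.

Lemma phi_is_uniq m (D : {set 'I_(m+m)}) k j1 j2 : phi_is D k j1 -> phi_is D k j2 -> j1 = j2.
Proof.
move=> /andP[h1 /forallP f1] /andP[h2 /forallP f2]; apply: val_inj.
case: (ltngtP j1 j2) => // h.
  by have := f2 j1; rewrite h /= ltnNge h1.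
by have := f1 j2; rewrite h /= ltnNge h2.
Qed.

Lemma surv_phi_le m (D : {set 'I_(m+m)}) k j : phi_is D k j -> (surv D j <= k.+1)%N.
Proof.
move=> /andP[_ /forallP f]; rewrite surv_count.
have := count_take_S (bD D) j.
have hj := ltn_ord j.
case E: (nat_of_ord j) hj => [|j'] hj.
  by rewrite take0 /= => h; apply: leq_trans h _.
have hj' : (j' < m + m)%N by lia.
have := f (Ordinal hj'); rewrite /= E ltnSn /= surv_count /=.
lia.
Qed.

Lemma phi_mono m (D : {set 'I_(m+m)}) (k1 k2 : nat) j1 j2 :
  (k1 < k2)%N -> phi_is D k1 j1 -> phi_is D k2 j2 -> (j1 < j2)%N.
Proof.
move=> hk p1 p2.
have s1 := surv_phi_le p1.
move: p1 p2 => /andP[h1 /forallP f1] /andP[h2 /forallP f2].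
case: (ltngtP j1 j2) => // h.
  by have := f1 j2; rewrite h /=; lia.
have e : j1 = j2 by apply: val_inj.
by subst; lia.
Qed.

Lemma QD_eq m (Q : {set 'I_m}) (D : {set 'I_(m+m)}) :
  (#|D| <= m)%N -> QD Q D = phi D @: Q.
Proof.
move=> hD; apply/setP => j; rewrite inE; apply/existsP/imsetP.
  case=> k /andP[kQ hk]; exists k => //; exact: phi_is_uniq hk (phi_isP k hD).
by case=> k kQ ->; exists k; rewrite kQ phi_isP.
Qed.

Lemma phi_inj m (D : {set 'I_(m+m)}) : (#|D| <= m)%N -> injective (phi D).
Proof.
move=> hD k1 k2 e; apply/val_inj.
case: (ltngtP k1 k2) => // h.
  by have := phi_mono h (phi_isP k1 hD) (phi_isP k2 hD); rewrite e ltnn.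
by have := phi_mono h (phi_isP k2 hD) (phi_isP k1 hD); rewrite e ltnn.
Qed.

Lemma sorted_enum_ord N (A : {set 'I_N}) :
  sorted (fun a b : 'I_N => (a < b)%N) (enum A).
Proof.
rewrite /enum_mem -enumT; apply: sorted_filter; first by move=> b a c; apply: ltn_trans.
by have := iota_ltn_sorted 0 N; rewrite -val_enum_ord sorted_map.
Qed.

Lemma enum_QD m (Q : {set 'I_m}) (D : {set 'I_(m+m)}) :
  (#|D| <= m)%N -> enum (phi D @: Q) = map (phi D) (enum Q).
Proof.
move=> hD.
apply: (@irr_sorted_eq _ (fun a b : 'I_(m+m) => (a < b)%N)).
- by move=> b a c; apply: ltn_trans.
- by move=> a; apply: ltnn.
- exact: sorted_enum_ord.
- rewrite sorted_map; apply: sub_sorted (sorted_enum_ord Q).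
  by move=> a b h; apply: phi_mono h (phi_isP a hD) (phi_isP b hD).
- move=> j; rewrite mem_enum; apply/imsetP/mapP; case=> k hk ->; exists k => //;
  by rewrite ?mem_enum in hk *.
Qed.

Lemma restr_QD m q (w : {ffun 'I_(m+m) -> bool}) (Q : {set 'I_m}) (D : {set 'I_(m+m)}) :
  (#|D| <= m)%N ->
  restr q w (QD Q D) = [ffun t : 'I_q => nth false [seq w (phi D k) | k <- enum Q] t].
Proof.
by move=> hD; rewrite /restr QD_eq // enum_QD // -map_comp.
Qed.

Lemma map_map2 (T U V : Type) (f : T -> U) (g : U -> V) s :
  map g (map f s) = map (fun x => g (f x)) s.
Proof. by elim: s => //= a s ->. Qed.

Definition ymap n m (C : {ffun 'I_n -> bool} -> {ffun 'I_m -> bool}) (D : {set 'I_(m+m)})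
  (x : {ffun 'I_n -> bool}) (r : {ffun 'I_m -> bool}) : {ffun 'I_m -> bool} :=
  [ffun k : 'I_m => Cpad C x r (phi D k)].

Lemma enum_split m : enum 'I_(m+m) = map (lshift m) (enum 'I_m) ++ map (@rshift m m) (enum 'I_m).
Proof.
apply: (inj_map val_inj); rewrite map_cat val_enum_ord.
have e1 : [seq val i | i <- map (lshift m) (enum 'I_m)] = iota 0 m.
  by rewrite -map_comp -(val_enum_ord m); apply: eq_map.
have e2 : [seq val i | i <- map (@rshift m m) (enum 'I_m)] = iota m m.
  have := iotaDl m 0 m; rewrite addn0 => ->.
  by rewrite -(val_enum_ord m) -!map_comp; apply: eq_map.
by rewrite e1 e2 iotaD.
Qed.

Lemma ED_lemma (R : realFieldType) n m (C : {ffun 'I_n -> bool} -> {ffun 'I_m -> bool})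
  (delta : R) (D : {set 'I_(m+m)}) x r :
  (#|D| <= m)%N ->
  ((#|D :&: [set j : 'I_(m + m) | (j < m)%N]|%:R <= delta * m%:R)%R) ->
  ED_le (ffseq (C x)) (ffseq (ymap C D x r)) (2 * delta * m%:R)%R.
Proof.
move=> hD hd.
set d := #|D :&: _| in hd.
pose b1 := [seq lshift m a \notin D | a <- enum 'I_m].
pose b2 := [seq @rshift m m a \notin D | a <- enum 'I_m].
have hbD : bD D = b1 ++ b2 by rewrite /bD enum_split map_cat; congr (_ ++ _); exact: map_map2.
have hw : ffseq (Cpad C x r) = ffseq (C x) ++ ffseq r.
  rewrite /ffseq enum_split map_cat; congr (_ ++ _); rewrite map_map2; apply: eq_map => a /=;
  rewrite /Cpad ffunE.
    by move: (unsplitK (m:=m) (n:=m) (inl a)) => /= ->.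
  by move: (unsplitK (m:=m) (n:=m) (inr a)) => /= ->.
have hsz : size b1 = size (ffseq (C x)) by rewrite !size_map.
have hszw : size (bD D) = size (ffseq (Cpad C x r)) by rewrite !size_map.
have hcnt : count id (bD D) = #|~: D|.
  by rewrite /bD count_map count_enum; apply: eq_card => t; rewrite !inE.
have hsM : (m <= size (mask (bD D) (ffseq (Cpad C x r))))%N.
  by rewrite size_mask // hcnt; have := cardsC D; rewrite card_ord; lia.
have hM : ffseq (ymap C D x r) = take m (mask (bD D) (ffseq (Cpad C x r))).
  apply: (@eq_from_nth _ false).
    by rewrite size_take size_map size_enum_ord; case: ltnP => //; lia.
  move=> k; rewrite size_map size_enum_ord => hk.
  rewrite /ffseq (nth_map (Ordinal hk)) ?size_enum_ord // nth_take //.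
  have -> : nth (Ordinal hk) (enum 'I_m) k = Ordinal hk by apply: val_inj; rewrite /= nth_enum_ord.
  rewrite ffunE.
  have p := phi_isP (Ordinal hk) hD.
  rewrite (@nth_mask_phi _ false _ _ k (phi D (Ordinal hk))) //.
  - by rewrite (nth_map (phi D (Ordinal hk))) ?size_enum_ord // nth_ord_enum.
  - by move: p => /andP[h _]; rewrite -surv_count.
  - move=> t ht; move: p => /andP[_ /forallP f].
    have ht' : (t < m + m)%N by apply: ltn_trans ht (ltn_ord _).
    by have := f (Ordinal ht'); rewrite /= ht /= surv_count ltnS.
have hcnt1 : count negb b1 = d.
  rewrite /b1 count_map.
  have -> : count (preim (fun a => lshift m a \notin D) negb) (enum 'I_m) =
            count (fun a => lshift m a \in D) (enum 'I_m).
    by apply: eq_count => a /=; rewrite negbK.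
  rewrite count_enum /d.
  have -> : D :&: [set j : 'I_(m + m) | (j < m)%N] = lshift m @: [set a | lshift m a \in D].
    apply/setP => j; rewrite !inE; apply/andP/imsetP.
      case=> jD jm; exists (Ordinal jm); first by rewrite inE; have -> : lshift m (Ordinal jm) = j by apply: val_inj.
      by apply: val_inj.
    by case=> a; rewrite inE => aD ->; split => //=.
  rewrite card_imset; last exact: lshift_inj.
  by apply: eq_card => a; rewrite inE.
rewrite hM hbD hw mask_cat //.
set M1 := mask b1 _; set M2 := mask b2 _.
have hM1 : (size M1 + d = m)%N.
  rewrite /M1 size_mask // -hcnt1 count_predC size_map size_enum_ord //.
rewrite take_cat ltnNge (_ : (size M1 <= m)%N) /=; last by lia.
set t := take _ M2.
have ht : (size t <= d)%N by rewrite /t size_take_min; lia.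
exists (d + size t)%N; split.
  apply: reach_trans (reach_app M1 t).
  by rewrite -hcnt1; apply: reach_mask.
apply: (@le_trans _ _ (2 * d)%:R); first by rewrite ler_nat; lia.
rewrite natrM -mulrA ler_pM2l //.
Qed.

Lemma sum_nat_card (R : realFieldType) (T : finType) (P : pred T) :
  \sum_(t : T) (P t)%:R = (#|[set t | P t]|%:R : R).
Proof.
rewrite (bigID P) /= [X in _ + X]big1; last by move=> t /negbTE ->.
rewrite addr0 (eq_bigr (fun _ => 1)); last by move=> t ->.
by rewrite sumr_const; congr (_ *+ _); apply: eq_card => t; rewrite inE.
Qed.

Lemma sum_bool_le (R : realFieldType) (T : finType) (P : pred T) :
  \sum_(t : T) (P t)%:R <= (#|T|%:R : R).
Proof.
rewrite -sum1_card natr_sum; apply: ler_sum => t _; rewrite ler_nat; by case: (P t).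
Qed.

Unset Implicit Arguments.
Theorem mainTheorem11 (R : realFieldType) (n m q : nat)
  (C : {ffun 'I_n -> bool} -> {ffun 'I_m -> bool}) (delta eps : R)
  (Dec : decoder R n) :
  0 < eps -> eps <= 1 / 2 ->
  insdel_LDC q C delta eps Dec ->
  (* Dec(., m, i) always queries exactly q positions *)
  (forall (i : 'I_n) (o : dec_outcome m), 0 < Dec m i o -> #|o.1| = q) ->
  forall pD : {ffun {set 'I_(m + m)} -> R},
  is_distr pD ->
  (forall D, 0 < pD D ->
     (#|D :&: [set j : 'I_(m + m) | (j < m)%N]|%:R <= delta * m%:R) /\
     (#|D| <= m)%N) ->
  forall i : 'I_n,
    3 * eps / 2 <=
    \sum_(o : dec_outcome m) \sum_(D : {set 'I_(m + m)})
       Dec m i o * pD D * (Good q C eps i (QD o.1 D))%:R.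
Proof.
move=> he0 he1 [hdist hloc hcor] hq pD [pD0 pD1] hpD i.
pose XR := ({ffun 'I_n -> bool} * {ffun 'I_m -> bool})%type.
pose NN : R := (2 ^ n * 2 ^ m)%:R.
have hcard : #|{: XR}| = (2 ^ n * 2 ^ m)%N by rewrite card_prod !card_ffun !card_bool !card_ord.
have NN0 : 0 < NN by rewrite ltr0n muln_gt0 !expn_gt0.
pose A (o : dec_outcome m) D : R :=
  \sum_(xr : XR) (o.2 (ymap C D xr.1 xr.2) == xr.1 i)%:R.
pose G (o : dec_outcome m) D : R := (Good q C eps i (QD o.1 D))%:R.
pose c := 1/2 + eps/4.
have [Dec0 Dec1] := hdist m i.
have low : (1/2 + eps) * NN <=
    \sum_(o : dec_outcome m) \sum_(D : {set 'I_(m+m)}) Dec m i o * pD D * A o D.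
  have -> : \sum_(o : dec_outcome m) \sum_(D : {set 'I_(m+m)}) Dec m i o * pD D * A o D =
        \sum_(xr : XR) \sum_(D : {set 'I_(m+m)}) pD D * dec_prob Dec i (ymap C D xr.1 xr.2) (xr.1 i).
    rewrite /A.
    under eq_bigr => o _ do under eq_bigr => D _ do rewrite mulr_sumr.
    rewrite exchange_big /=.
    under eq_bigr => D _ do rewrite exchange_big /=.
    rewrite exchange_big /=; apply: eq_bigr => xr _; apply: eq_bigr => D _.
    rewrite /dec_prob mulr_sumr [RHS]big_mkcond; apply: eq_bigr => o _.
    by case: (o.2 (ymap C D xr.1 xr.2) == xr.1 i); rewrite /= ?mulr1 ?mulr0 // mulrC.
  apply: (@le_trans _ _ (\sum_(xr : XR) (1/2 + eps))).
    by rewrite sumr_const hcard /NN mulr_natr.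
  apply: ler_sum => xr _.
  have -> : 1/2 + eps = \sum_(D : {set 'I_(m+m)}) pD D * (1/2 + eps).
    by rewrite -mulr_suml pD1 !mul1r.
  apply: ler_sum => D _.
  have [->|hp] := eqVneq (pD D) 0; first by rewrite !mul0r.
  have hp' : 0 < pD D by rewrite lt_def hp pD0.
  apply: ler_wpM2l; first exact: pD0.
  have [h1 h2] := hpD D hp'.
  apply: hcor; exact: ED_lemma.
have up : forall o D, Dec m i o * pD D * A o D <=
    Dec m i o * pD D * (NN * (G o D * (1 - c) + c)).
  move=> o D.
  have [->|h0] := eqVneq (Dec m i o) 0; first by rewrite !mul0r.
  have [->|h1] := eqVneq (pD D) 0; first by rewrite mulr0 !mul0r.
  have hO : 0 < Dec m i o by rewrite lt_def h0 Dec0.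
  have hP : 0 < pD D by rewrite lt_def h1 pD0.
  apply: ler_wpM2l; first by rewrite mulr_ge0.
  have [hD1 hD2] := hpD D hP.
  have [_ hl] := hloc m i o hO.
  have hQ := hq i o hO.
  rewrite /G; case hG: (Good _ _ _ _ _) => /=.
    rewrite mul1r subrK mulr1 /A /NN -hcard; exact: sum_bool_le.
  rewrite mul0r add0r.
  have hcardQ : #|QD o.1 D| = q.
    by rewrite QD_eq // card_imset // ?hQ //; exact: phi_inj.
  move: hG; rewrite /Good hcardQ eqxx /= => /negbT /existsPn H.
  pose g (z : {ffun 'I_q -> bool}) : {ffun 'I_m -> bool} :=
    [ffun k => nth false [seq z t | t <- enum 'I_q] (index k (enum o.1))].
  pose f := [ffun z => o.2 (g z)].
  have key : forall x r, f (restr q (Cpad C x r) (QD o.1 D)) = o.2 (ymap C D x r).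
    move=> x r; rewrite ffunE restr_QD //; apply: hl => k kQ; rewrite !ffunE.
    set L := [seq _ | _ <- enum o.1].
    have -> : [seq [ffun t : 'I_q => nth false L t] t | t <- enum 'I_q] = L.
      apply: (@eq_from_nth _ false).
        by rewrite size_map size_enum_ord /L size_map -cardE hQ.
      move=> j; rewrite size_map size_enum_ord => hj.
      by rewrite (nth_map (Ordinal hj)) ?size_enum_ord // ffunE nth_enum_ord.
    by rewrite /L (nth_map k) ?index_mem ?mem_enum // nth_index ?mem_enum // ffunE.
  have := H f; rewrite -ltNge ltr_pdivrMr; last by rewrite ltr0n muln_gt0 !expn_gt0.
  move=> hlt; rewrite mulrC; apply: ltW; apply: le_lt_trans hlt.
  rewrite /A sum_nat_card le_eqVlt; apply/orP; left; apply/eqP; congr (_%:R).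
  by apply: eq_card => xr; rewrite !inE key.
have e : forall o D, Dec m i o * pD D * (NN * (G o D * (1 - c) + c)) =
    NN * (1 - c) * (Dec m i o * pD D * G o D) + NN * c * (Dec m i o * pD D).
  by move=> o D; ring.
set S := \sum_(o : dec_outcome m) \sum_(D : {set 'I_(m + m)}) _.
have hS : S = \sum_(o : dec_outcome m) \sum_(D : {set 'I_(m + m)}) Dec m i o * pD D * G o D by [].
have hup : \sum_(o : dec_outcome m) \sum_(D : {set 'I_(m+m)}) Dec m i o * pD D * A o D <=
    NN * (1 - c) * S + NN * c.
  apply: (@le_trans _ _ (\sum_(o : dec_outcome m) \sum_(D : {set 'I_(m+m)}) Dec m i o * pD D * (NN * (G o D * (1 - c) + c)))).
    by apply: ler_sum => o _; apply: ler_sum => D _; exact: up.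
  under eq_bigr => o _ do under eq_bigr => D _ do rewrite e.
  under eq_bigr => o _ do rewrite big_split -!mulr_sumr /=.
  rewrite big_split -!mulr_sumr /= hS.
  have -> : \sum_(o : dec_outcome m) Dec m i o * \sum_(D : {set 'I_(m+m)}) pD D = 1.
    by under eq_bigr => o _ do rewrite pD1 mulr1; exact: Dec1.
  by rewrite mulr1.
have S0 : 0 <= S.
  by apply: sumr_ge0 => o _; apply: sumr_ge0 => D _; rewrite !mulr_ge0 ?ler0n.
have h := le_trans low hup.
have h' : 1/2 + eps <= (1 - c) * S + c.
  rewrite -(ler_pM2r NN0); apply: le_trans h _; rewrite le_eqVlt; apply/orP; left; apply/eqP; ring.
rewrite /c in h'.
nra.
Qed.
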